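(* Fix $\lambda>0$ and let $g(\lambda) = (1-e^{-\lambda})/\lambda$. Let $\mathbb P_p$ be the set of finite point-mass probability measures on $\mathbb R$, i.e. measures $\rho = \sum_{k=1}^n a_k\delta_{x_k}$ with $n \in \mathbb N$, $x_k \in \mathbb R$, $a_k \geqslant 0$, $\sum_k a_k = 1$, and let $N_p = \{\rho\in\mathbb P_p : \langle\rho,x\rangle = 0\}$, where $\langle\rho,x\rangle = \sum_k a_kx_k$. Define $A$ on $\mathbb P_p\setminus N_p$ by $$A(\rho) = \left(1 - g(\lambda) + g(\lambda)\frac{x}{\langle \rho, x\rangle}\right)\rho = \sum_k a_k\left(1 - g(\lambda) + g(\lambda)\frac{x_k}{\langle \rho, x\rangle}\right)\delta_{x_k}.$$ Equip $\mathbb P_p\setminus N_p$ and the target with the topology in which $\rho_n \to \rho$ iff $\int\phi\,d\rho_n \to \int\phi\,d\rho$ for every continuous compactly supported $\phi\colon\mathbb R\to\mathbb R$ (the subspace topology from the space of Radon measures / generalized functions on $C_c$ with the weak topology). Then $A$ is continuous at no point of $\mathbb P_p\setminus N_p$.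
   Context: $\delta_a$ denotes the Dirac measure at $a$; $\mathbb N$ includes $0$ but here $n\geqslant 1$ is implicit since $\rho$ is a probability measure. *)

(* Defs.v *)
From Stdlib Require Import Reals List.
Import ListNotations.
Open Scope R_scope.

(* A finite point-mass (signed) measure  sum_k a_k delta_{x_k}
   represented by the list of pairs (a_k, x_k). *)
Definition pmeasure := list (R * R).

Definition integ (rho : pmeasure) (phi : R -> R) : R :=
  fold_right (fun p acc => fst p * phi (snd p) + acc) 0 rho.

Definition mean (rho : pmeasure) : R := integ rho (fun x => x).

Definition is_Pp (rho : pmeasure) : Prop :=
  Forall (fun p => 0 <= fst p) rho /\ integ rho (fun _ => 1) = 1.

Definition g (lam : R) : R := (1 - exp (- lam)) / lam.

Definition Aop (lam : R) (rho : pmeasure) : pmeasure :=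
  map (fun p => (fst p * (1 - g lam + g lam * snd p / mean rho), snd p)) rho.

Definition Cc (phi : R -> R) : Prop :=
  continuity phi /\ exists M, forall x, M < Rabs x -> phi x = 0.

Definition near (ps : list (R -> R)) (eps : R) (mu nu : pmeasure) : Prop :=
  Forall (fun phi => Rabs (integ nu phi - integ mu phi) < eps) ps.

(* continuity of A at rho, domain P_p \ N_p, both sides with the
   weak topology generated by the maps mu |-> int phi dmu, phi in C_c *)
Definition A_continuous_at (lam : R) (rho : pmeasure) : Prop :=
  forall (ps : list (R -> R)) (eps : R), Forall Cc ps -> 0 < eps ->
  exists (qs : list (R -> R)) (delta : R), Forall Cc qs /\ 0 < delta /\
    forall sigma : pmeasure, is_Pp sigma -> mean sigma <> 0 ->
      near qs delta rho sigma -> near ps eps (Aop lam rho) (Aop lam sigma).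

(* Main.v *)
Require Import Defs.
From Stdlib Require Import Reals List Lra.
Import ListNotations.
Open Scope R_scope.

Lemma integ_app (l1 l2 : pmeasure) f : integ (l1 ++ l2) f = integ l1 f + integ l2 f.
Proof. induction l1 as [|p l IH]; simpl; [lra| unfold integ in *; simpl; rewrite IH; lra]. Qed.

Lemma integ_scale (l : pmeasure) c f :
  integ (map (fun p => (c * fst p, snd p)) l) f = c * integ l f.
Proof. induction l as [|p l IH]; unfold integ in *; simpl; [lra| rewrite IH; lra]. Qed.

Lemma integ_mapA (h : R -> R) (l : pmeasure) f :
  integ (map (fun p => (fst p * h (snd p), snd p)) l) f = integ l (fun x => h x * f x).
Proof. induction l as [|p l IH]; unfold integ in *; simpl; [lra| rewrite IH; lra]. Qed.

Lemma integ_ext (l : pmeasure) f f' :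
  (forall p, In p l -> f (snd p) = f' (snd p)) -> integ l f = integ l f'.
Proof.
  induction l as [|p l IH]; intros H; unfold integ in *; simpl; [lra|].
  rewrite H by (left; auto). rewrite IH; [lra|]. intros q Hq; apply H; right; auto.
Qed.

Lemma integ_lin (l : pmeasure) a b f h :
  integ l (fun x => a * f x + b * h x) = a * integ l f + b * integ l h.
Proof. induction l as [|p l IH]; unfold integ in *; simpl; [lra| rewrite IH; ring]. Qed.

Lemma bound_supp (l : pmeasure) : exists B, 0 <= B /\ forall p, In p l -> Rabs (snd p) <= B.
Proof.
  induction l as [|p l [B [HB H]]].
  - exists 0; split; [lra| intros p []].
  - exists (Rmax B (Rabs (snd p))); split.
    + apply Rle_trans with B; [lra| apply Rmax_l].
    + intros q [<-|Hq]; [apply Rmax_r|]. apply Rle_trans with B; [auto| apply Rmax_l].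
Qed.

Lemma lemma_qs (rho : pmeasure) qs : Forall Cc qs -> forall delta, 0 < delta ->
  exists Y T, 0 < T /\ forall phi, In phi qs ->
    (forall y, Y < y -> phi y = 0) /\ T * Rabs (integ rho phi) < delta.
Proof.
  induction 1 as [|phi qs Hphi Hqs IH]; intros delta Hd.
  - exists 0, 1; split; [lra| intros phi []].
  - destruct (IH delta Hd) as [Y [T [HT H]]].
    destruct Hphi as [_ [Mp HMp]].
    set (Iv := Rabs (integ rho phi)).
    assert (HI : 0 <= Iv) by apply Rabs_pos.
    exists (Rmax Y (Rabs Mp)), (Rmin T (delta / (Iv + 1))).
    assert (H0 : 0 < delta / (Iv+1)) by (apply Rdiv_lt_0_compat; lra).
    split; [apply Rmin_glb_lt; auto|].
    intros psi [<-|Hin].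
    + split.
      * intros y Hy. apply HMp.
        assert (Y <= Rmax Y (Rabs Mp)) by apply Rmax_l.
        assert (Rabs Mp <= Rmax Y (Rabs Mp)) by apply Rmax_r.
        assert (Mp <= Rabs Mp) by apply Rle_abs.
        assert (0 <= Rabs Mp) by apply Rabs_pos.
        rewrite Rabs_right by lra. lra.
      * fold Iv. apply Rle_lt_trans with (delta / (Iv+1) * Iv).
        { apply Rmult_le_compat_r; [auto| apply Rmin_r]. }
        assert (delta / (Iv+1) * Iv = delta * (Iv / (Iv+1))) by (field; lra).
        rewrite H1. assert (Iv/(Iv+1) < 1).
        { apply (Rmult_lt_reg_r (Iv+1)); [lra|]. field_simplify; lra. }
        nra.
    + destruct (H psi Hin) as [H1 H2]. split.
      * intros y Hy. apply H1. assert (Y <= Rmax Y (Rabs Mp)) by apply Rmax_l. lra.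
      * apply Rle_lt_trans with (T * Rabs (integ rho psi)); auto.
        apply Rmult_le_compat_r; [apply Rabs_pos| apply Rmin_l].
Qed.

Definition bump (B x : R) : R :=
  (Rabs (B + 1 - Rabs x) - Rabs (B + 1 - Rabs x - 1) + 1) / 2.

Lemma bump_cont B : continuity (bump B).
Proof.
  intro x. unfold bump.
  assert (Ha : forall f, continuity_pt f x -> continuity_pt (fun x => Rabs (f x)) x).
  { intros f Hf. apply (continuity_pt_comp f Rabs); auto. apply Rcontinuity_abs. }
  assert (Hu : continuity_pt (fun x => B + 1 - Rabs x) x).
  { apply continuity_pt_minus; [apply continuity_pt_const; intros ? ?; auto| apply Rcontinuity_abs]. }
  unfold Rdiv. apply continuity_pt_mult; [|apply continuity_pt_const; intros ? ?; auto].
  apply continuity_pt_plus; [|apply continuity_pt_const; intros ? ?; auto].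
  apply continuity_pt_minus.
  - apply (Ha (fun x => B + 1 - Rabs x)); auto.
  - apply (Ha (fun x => B + 1 - Rabs x - 1)).
    apply continuity_pt_minus; auto. apply continuity_pt_const; intros ? ?; auto.
Qed.

Lemma bump_out B x : B + 1 < Rabs x -> bump B x = 0.
Proof.
  intros H. unfold bump. rewrite (Rabs_left (B + 1 - Rabs x)) by lra.
  rewrite (Rabs_left (B + 1 - Rabs x - 1)) by lra. field.
Qed.

Lemma bump_in B x : Rabs x <= B -> bump B x = 1.
Proof.
  intros H. unfold bump. rewrite (Rabs_right (B + 1 - Rabs x)) by lra.
  rewrite (Rabs_right (B + 1 - Rabs x - 1)) by lra. field.
Qed.

Lemma integ_A lam (rho : pmeasure) f :
  integ (Aop lam rho) f =
  integ rho (fun x => (1 - g lam + g lam * x / mean rho) * f x).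
Proof. unfold Aop. apply (integ_mapA (fun x => 1 - g lam + g lam * x / mean rho)). Qed.

Theorem proposition1 (lam : R) (hlam : 0 < lam) (rho : pmeasure)
  (hP : is_Pp rho) (hN : mean rho <> 0) :
  ~ A_continuous_at lam rho.
Proof.
  intro Hc.
  assert (gpos : 0 < g lam).
  { unfold g. apply Rdiv_lt_0_compat; auto.
    assert (exp (- lam) < exp 0) by (apply exp_increasing; lra). rewrite exp_0 in H; lra. }
  set (gg := g lam) in *.
  destruct hP as [Hpos Hsum].
  set (m := mean rho) in *.
  destruct (bound_supp rho) as [B [HB0 HB]].
  assert (Hphi : Cc (bump B)).
  { split; [apply bump_cont| exists (B+1); apply bump_out]. }
  destruct (Hc [bump B] (gg/2)) as [qs [delta [Hqs [Hd Hnear]]]].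
  { constructor; auto. } { lra. }
  destruct (lemma_qs rho qs Hqs delta Hd) as [Y [T [HT HY]]].
  set (t := Rmin (Rmin T (1/2)) (gg / (8 * (Rabs (1 - gg) + 1)))).
  assert (Hk : 0 < gg / (8 * (Rabs (1 - gg) + 1))).
  { apply Rdiv_lt_0_compat; auto. assert (0 <= Rabs (1-gg)) by apply Rabs_pos. lra. }
  assert (HtT : t <= T) by (unfold t; eapply Rle_trans; [apply Rmin_l| apply Rmin_l]).
  assert (Ht2 : t <= 1/2) by (unfold t; eapply Rle_trans; [apply Rmin_l| apply Rmin_r]).
  assert (Htk : t <= gg / (8 * (Rabs (1 - gg) + 1))) by (unfold t; apply Rmin_r).
  assert (Ht0 : 0 < t).
  { unfold t. apply Rmin_glb_lt; auto. apply Rmin_glb_lt; lra. }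
  assert (Htg : t * (Rabs (1 - gg) + 1) <= gg / 8).
  { assert (0 <= Rabs (1-gg)) by apply Rabs_pos.
    apply Rmult_le_compat_r with (r := Rabs (1 - gg) + 1) in Htk; [|lra].
    replace (gg / (8 * (Rabs (1 - gg) + 1)) * (Rabs (1 - gg) + 1)) with (gg/8) in Htk
      by (field; lra). lra. }
  set (y := (5 * Rabs m + 1) / t + Rabs Y + B + 2).
  assert (Hm0 : 0 <= Rabs m) by apply Rabs_pos.
  assert (HYa : Y <= Rabs Y) by apply Rle_abs.
  assert (HYb : 0 <= Rabs Y) by apply Rabs_pos.
  assert (Hty : t * y >= 5 * Rabs m + 1).
  { unfold y. replace (t * ((5 * Rabs m + 1) / t + Rabs Y + B + 2))
      with ((5 * Rabs m + 1) + t * (Rabs Y + B + 2)) by (field; lra). nra. }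
  assert (Hy0 : (5 * Rabs m + 1) / t > 0) by (apply Rdiv_lt_0_compat; lra).
  assert (HyY : Y < y) by (unfold y; lra).
  assert (HyB : B + 1 < Rabs y) by (rewrite Rabs_right; unfold y; lra).
  set (sigma := map (fun p => ((1 - t) * fst p, snd p)) rho ++ [(t, y)]).
  assert (Hint : forall f, integ sigma f = (1 - t) * integ rho f + t * f y).
  { intro f. unfold sigma. rewrite integ_app, integ_scale. unfold integ; simpl. ring. }
  set (M := mean sigma).
  assert (HM : M = (1 - t) * m + t * y) by (unfold M, mean; rewrite Hint; reflexivity).
  assert (HMb : M >= 4 * Rabs m + 1).
  { assert (- Rabs m <= m) by (pose proof (Rle_abs (- m)) as Hq; rewrite Rabs_Ropp in Hq; lra).
    rewrite HM. nra. }
  assert (HAsig : forall c, integ rho (fun x => (1 - gg + gg * x / c) * bump B x)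
                  = (1 - gg) + gg / c * m).
  { intro c. rewrite (integ_ext rho _ (fun x => (1 - gg) * 1 + (gg / c) * x)).
    - rewrite integ_lin, Hsum. unfold m, mean. unfold Rdiv; ring.
    - intros p Hp. rewrite bump_in by (apply HB; auto). unfold Rdiv; ring. }
  assert (Hr : integ (Aop lam rho) (bump B) = 1).
  { rewrite integ_A. fold gg m. rewrite HAsig. field. auto. }
  assert (Hs : integ (Aop lam sigma) (bump B) = (1 - t) * ((1 - gg) + gg / M * m)).
  { rewrite integ_A. fold gg M. rewrite Hint, HAsig, (bump_out B y HyB). ring. }
  assert (Hn : near [bump B] (gg / 2) (Aop lam rho) (Aop lam sigma)).
  { apply Hnear.
    - split.
      + apply Forall_forall. intros p Hp. apply in_app_or in Hp. destruct Hp as [Hp|[<-|[]]].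
        * apply in_map_iff in Hp. destruct Hp as [q [<- Hq]]. simpl.
          rewrite Forall_forall in Hpos. specialize (Hpos q Hq). nra.
        * simpl; lra.
      + rewrite Hint, Hsum. ring.
    - fold M. lra.
    - apply Forall_forall. intros phi Hin. destruct (HY phi Hin) as [H1 H2].
      rewrite Hint, (H1 y HyY).
      replace ((1 - t) * integ rho phi + t * 0 - integ rho phi) with (- (t * integ rho phi)) by ring.
      rewrite Rabs_Ropp, Rabs_mult, (Rabs_right t) by lra.
      apply Rle_lt_trans with (T * Rabs (integ rho phi)); auto.
      apply Rmult_le_compat_r; auto. apply Rabs_pos. }
  inversion Hn as [|? ? Hb _]. rewrite Hs, Hr in Hb.
  assert (HM0 : 0 < M) by lra.
  set (r := m / M).
  assert (Hr4 : Rabs r <= 1/4).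
  { unfold r. unfold Rdiv. rewrite Rabs_mult, Rabs_inv, (Rabs_right M) by lra.
    apply (Rmult_le_reg_r M); [lra|]. field_simplify; lra. }
  replace (gg / M * m) with (gg * r) in Hb by (unfold r; field; lra).
  assert (Hr' : r <= 1/4) by (eapply Rle_trans; [apply Rle_abs| exact Hr4]).
  assert (Hg1 : - Rabs (1 - gg) <= 1 - gg) by (pose proof (Rle_abs (- (1 - gg))) as Hq; rewrite Rabs_Ropp in Hq; lra).
  assert (Hb2 : 1 - (1 - t) * (1 - gg + gg * r) < gg / 2).
  { eapply Rle_lt_trans; [|exact Hb].
    pose proof (Rle_abs (- ((1 - t) * (1 - gg + gg * r) - 1))) as Hq.
    rewrite Rabs_Ropp in Hq. lra. }
  assert (Habs0 : 0 <= Rabs (1 - gg)) by apply Rabs_pos.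
  assert (E1 : t * (1 - gg) >= - (gg / 8)) by nra.
  assert (E2 : (1 - t) * gg * r <= gg / 4).
  { assert (0 <= (1 - t) * gg) by nra.
    apply Rle_trans with ((1 - t) * gg * (1/4)); [apply Rmult_le_compat_l; auto| nra]. }
  nra.
Qed.
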